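(* Let $R$ be an almost Dedekind domain and $M\in\mathrm{Max}(R)$. Then $M$ is an isolated point of $\mathcal{M}$ if and only if $M$ is finitely generated.
   Context: $R$ almost Dedekind: $R_M$ is a DVR for every maximal $M$. $\mathcal{M}$ is $\mathrm{Max}(R)$ with the inverse topology, i.e. the restriction of the coarsest topology on $\mathrm{Spec}(R)$ in which every Zariski-open Zariski-compact subset is closed (on $\mathrm{Max}(R)$ it coincides with the constructible topology). *)

(* Defs.v *)
From HB Require Import structures.
From mathcomp Require Import all_boot all_order all_algebra.
From mathcomp Require Import fraction.
From mathcomp Require Import boolp classical_sets.
Set Implicit Arguments. Unset Strict Implicit. Unset Printing Implicit Defensive.
Import Order.TTheory GRing.Theory Num.Theory.
Local Open Scope classical_set_scope.
Local Open Scope ring_scope.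

Section Defs.
Variable R : idomainType.

Definition is_ideal (I : set R) : Prop :=
  I 0 /\ (forall x y, I x -> I y -> I (x + y)) /\ (forall a x, I x -> I (a * x)).

Definition prime_ideal (P : set R) : Prop :=
  is_ideal P /\ ~ P 1 /\ (forall x y, P (x * y) -> P x \/ P y).

Definition maximal_ideal (M : set R) : Prop :=
  is_ideal M /\ ~ M 1 /\
  (forall J : set R, is_ideal J -> M `<=` J -> J = M \/ J = setT).

Definition finitely_generated (I : set R) : Prop :=
  exists (n : nat) (a : 'I_n -> R),
    I = [set x | exists c : 'I_n -> R, x = \sum_(i < n) c i * a i].

Definition localization (M : set R) : set {fraction R} :=
  [set z | exists a s : R, ~ M s /\ z = FracField.tofrac a / FracField.tofrac s].

(* S is a DVR: the valuation ring of a discrete valuation v : K^* ->> Z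
   of the fraction field K (Atiyah-Macdonald, ch. 9). *)
Definition is_DVR (S : set {fraction R}) : Prop :=
  exists v : {fraction R} -> int,
    (forall x y, x != 0 -> y != 0 -> v (x * y) = v x + v y) /\
    (forall x y, x != 0 -> y != 0 -> x + y != 0 ->
        Order.min (v x) (v y) <= v (x + y)) /\
    (forall n : int, exists x, x != 0 /\ v x = n) /\
    S = [set x | x = 0 \/ (x != 0 /\ 0 <= v x)].

Definition almost_Dedekind : Prop :=
  forall M : set R, maximal_ideal M -> is_DVR (localization M).

Definition Spec : set (set R) := [set P | prime_ideal P].
Definition MaxSpec : set (set R) := [set M | maximal_ideal M].

Definition zariski_open (U : set (set R)) : Prop :=
  exists I : set R, U = [set P | prime_ideal P /\ ~ (I `<=` P)].

Definition zariski_compact (U : set (set R)) : Prop :=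
  forall C : set (set (set R)), (forall V, C V -> zariski_open V) ->
    U `<=` \bigcup_(V in C) V ->
    exists s : seq (set (set R)), (forall V, V \in s -> C V) /\
      U `<=` \bigcup_(V in [set V | V \in s]) V.

Definition is_topology_on_Spec (T : set (set (set R))) : Prop :=
  T Spec /\ (forall U, T U -> U `<=` Spec) /\
  (forall C : set (set (set R)), C `<=` T -> T (\bigcup_(U in C) U)) /\
  (forall U V, T U -> T V -> T (U `&` V)).

(* Inverse topology: the coarsest topology on Spec(R) in which every
   Zariski-open Zariski-compact subset is closed. *)
Definition inverse_open (U : set (set R)) : Prop :=
  forall T, is_topology_on_Spec T ->
    (forall K, zariski_open K -> zariski_compact K -> T (Spec `\` K)) -> T U.

Definition isolated_in_inverse_Max (M : set R) : Prop :=
  exists U, inverse_open U /\ U `&` MaxSpec = [set M].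

End Defs.

(* Main.v *)
Require Import Defs.
From mathcomp Require Import all_boot all_order all_algebra.
From mathcomp Require Import fraction boolp classical_sets zify.
Set Implicit Arguments. Unset Strict Implicit. Unset Printing Implicit Defensive.
Import Order.TTheory GRing.Theory Num.Theory.
Local Open Scope classical_set_scope.
Local Open Scope ring_scope.

Section Aux.
Variable R : idomainType.
Implicit Types (I J L P Q N : set R).

Lemma idealN I x : is_ideal I -> I x -> I (- x).
Proof. by move=> [_ [_ HM]] Ix; rewrite -mulN1r; apply: HM. Qed.

Lemma idealMr I x a : is_ideal I -> I x -> I (x * a).
Proof. by move=> [_ [_ HM]] Ix; rewrite mulrC; apply: HM. Qed.

Lemma ideal_setT_of1 I : is_ideal I -> I 1 -> I = setT.
Proof.
move=> [_ [_ HM]] I1; apply/seteqP; split=> // x _.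
by rewrite -(mulr1 x); apply: HM.
Qed.

Lemma prime_pow P a k : prime_ideal P -> P (a ^+ k) -> P a.
Proof.
move=> [_ [P1 Pm]]; elim: k => [|k IH]; first by rewrite expr0.
by rewrite exprS => /Pm [//|]; apply: IH.
Qed.

Lemma max_prime N : maximal_ideal N -> prime_ideal N.
Proof.
move=> [iN [N1 Nmax]]; split=> //; split=> // x y Nxy.
have [Nx|Nx] := pselect (N x); first by left.
right.
pose J := [set z | exists p r, N p /\ z = p + r * x].
have iJ : is_ideal J.
  case: iN => N0 [ND NM]; split; first by exists 0, 0; split=> //; rewrite mul0r addr0.
  split.
    move=> _ _ [p [r [Np ->]]] [p' [r' [Np' ->]]].
    exists (p + p'), (r + r'); split; first exact: ND.
    by rewrite mulrDl addrACA.
  move=> a _ [p [r [Np ->]]]; exists (a * p), (a * r); split; first exact: NM.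
  by rewrite mulrDr mulrA.
have NJ : N `<=` J by move=> z Nz; exists z, 0; split=> //; rewrite mul0r addr0.
have [JN|JT] := Nmax J iJ NJ.
  by exfalso; apply: Nx; rewrite -JN; exists 0, 1; split; [by case: iN | by rewrite mul1r add0r].
have : J 1 by rewrite JT.
case=> p [r [Np e]].
have -> : y = p * y + r * (x * y) by rewrite mulrA -mulrDl -e mul1r.
have Npy : N (p * y) by apply: idealMr.
have Nr : N (r * (x * y)) by case: iN => _ [_ NM]; apply: NM.
by case: iN => _ [ND _]; apply: ND.
Qed.

Lemma zorn_avoid a L : is_ideal L -> (forall k, ~ L (a ^+ k)) ->
  exists P, [/\ is_ideal P, L `<=` P, (forall k, ~ P (a ^+ k)) &
    forall Q, is_ideal Q -> P `<=` Q -> (forall k, ~ Q (a ^+ k)) -> Q = P].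
Proof.
move=> iL La.
pose G := [set Q : set R | Q = set0 \/
   [/\ is_ideal Q, L `<=` Q & forall k, ~ Q (a ^+ k)]].
have [A [GA Amax]] : exists A, G A /\ forall B, A `<` B -> ~ G B.
  apply: Zorn_bigcup => F FG Ftot.
  have [allF0|] := pselect (forall X, F X -> X = set0).
    left; apply/seteqP; split=> // x [X FX]; by rewrite (allF0 X FX).
  move=> /existsNP [X0] /not_implyP [FX0 X0n0].
  have good : forall X, F X -> forall x, X x ->
      [/\ is_ideal X, L `<=` X & forall k, ~ X (a ^+ k)].
    move=> X FX x Xx; case: (FG X FX) => // X0e.
    by rewrite X0e in Xx.
  have [iX0 LX0 aX0] : [/\ is_ideal X0, L `<=` X0 & forall k, ~ X0 (a ^+ k)].
    by case: (FG X0 FX0).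
  right; split.
  - split; first by exists X0 => //; case: iX0.
    split.
      move=> x y [X FX Xx] [Y FY Yy].
      have [XY|YX] := Ftot X Y FX FY.
        have [[_ [D _]] _ _] := good Y FY y Yy.
        by exists Y => //; apply: D => //; apply: XY.
      have [[_ [D _]] _ _] := good X FX x Xx.
      by exists X => //; apply: D => //; apply: YX.
    move=> r x [X FX Xx]; have [[_ [_ HM]] _ _] := good X FX x Xx.
    by exists X => //; apply: HM.
  - by move=> x Lx; exists X0 => //; apply: LX0.
  - move=> k [X FX Xx]; have [_ _ HX] := good X FX _ Xx; exact: HX Xx.
case: GA => [A0|[iA LA aA]].
  exfalso; apply: (Amax L); last by right; split=> // ? ?.
  rewrite A0; split=> // /(_ 0); case: iL => L0 _ /(_ L0).
  by [].
exists A; split=> // Q iQ AQ aQ.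
apply: contrapT => QA; apply: (Amax Q); last first.
  by right; split=> // x /LA /AQ.
split=> // QA'; apply: QA; apply/seteqP; split=> //.
Qed.

Lemma avoid_prime a P : is_ideal P -> (forall k, ~ P (a ^+ k)) ->
  (forall Q, is_ideal Q -> P `<=` Q -> (forall k, ~ Q (a ^+ k)) -> Q = P) ->
  prime_ideal P.
Proof.
move=> iP aP Pmax; split=> //; split; first by move: (aP 0%N); rewrite expr0.
move=> x y Pxy; apply: contrapT => /not_orP [Px Py].
have ext : forall z, ~ P z -> exists k p r, P p /\ a ^+ k = p + r * z.
  move=> z Pz; apply: contrapT => hz.
  pose J := [set w | exists p r, P p /\ w = p + r * z].
  have iJ : is_ideal J.
    case: iP => P0 [PD PM]; split; first by exists 0, 0; split=> //; rewrite mul0r addr0.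
    split.
      move=> _ _ [p [r [Pp ->]]] [p' [r' [Pp' ->]]].
      exists (p + p'), (r + r'); split; first exact: PD.
      by rewrite mulrDl addrACA.
    move=> b _ [p [r [Pp ->]]]; exists (b * p), (b * r); split; first exact: PM.
    by rewrite mulrDr mulrA.
  have PJ : P `<=` J by move=> w Pw; exists w, 0; split=> //; rewrite mul0r addr0.
  have JP : J = P.
    apply: Pmax => // k [p [r [Pp e]]]; apply: hz; exists k, p, r; split=> //.
  by apply: Pz; rewrite -JP; exists 0, 1; split; [by case: iP | by rewrite mul1r add0r].
have [i [p [r [Pp ei]]]] := ext x Px.
have [j [p' [r' [Pp' ej]]]] := ext y Py.
apply: (aP (i + j)%N); rewrite exprD ei ej.
have -> : (p + r * x) * (p' + r' * y) =
   p * (p' + r' * y) + (r * x * p' + (r * r') * (x * y)).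
  by rewrite mulrDl; congr (_ + _); rewrite mulrDr mulrACA.
have h1 : P (p * (p' + r' * y)) by apply: idealMr.
have h2 : P (r * x * p') by case: iP => _ [_ PM]; apply: PM.
have h3 : P (r * r' * (x * y)) by case: iP => _ [_ PM]; apply: PM.
by case: iP => _ [PD _]; apply: (PD) => //; apply: (PD).
Qed.

Lemma exists_max L : is_ideal L -> ~ L 1 -> exists N, maximal_ideal N /\ L `<=` N.
Proof.
move=> iL L1.
have h1 : forall k, ~ L (1 ^+ k) by move=> k; rewrite expr1n.
have [P [iP LP aP Pmax]] := @zorn_avoid 1 L iL h1.
exists P; split=> //; split=> //; split; first by move: (aP 0%N); rewrite expr1n.
move=> J iJ PJ; have [J1|J1] := pselect (J 1).
  by right; apply: ideal_setT_of1.
by left; apply: Pmax => // k; rewrite expr1n.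
Qed.

Lemma ideal_one I : is_ideal I -> (forall N, maximal_ideal N -> ~ I `<=` N) -> I 1.
Proof.
move=> iI H; apply: contrapT => I1.
by have [N [mN IN]] := exists_max iI I1; apply: (H N mN IN).
Qed.

End Aux.

Section Aux2.
Variable R : idomainType.
Implicit Types (I J L P Q N : set R).

Definition span (A : set R) : set R :=
  [set x | exists l : seq (R * R), (forall p, p \in l -> A p.2) /\
     x = \sum_(p <- l) p.1 * p.2].

Lemma span_ideal A : is_ideal (span A).
Proof.
split; first by exists [::]; rewrite big_nil.
split.
  move=> _ _ [l1 [H1 ->]] [l2 [H2 ->]]; exists (l1 ++ l2); split.
    by move=> p; rewrite mem_cat => /orP [/H1|/H2].
  by rewrite big_cat.
move=> a _ [l [H ->]]; exists (map (fun p => (a * p.1, p.2)) l); split.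
  by move=> p /mapP [q ql ->] /=; apply: H.
by rewrite big_map mulr_sumr; apply: eq_bigr => p _ /=; rewrite mulrA.
Qed.

Lemma span_sub A I : is_ideal I -> A `<=` I -> span A `<=` I.
Proof.
move=> iI AI _ [l [H ->]]; elim: l H => [|p l IH] H.
  by rewrite big_nil; case: iI.
rewrite big_cons; case: (iI) => _ [ID IM]; apply: ID.
  by apply: IM; apply: AI; apply: H; rewrite mem_head.
by apply: IH => q ql; apply: H; rewrite in_cons ql orbT.
Qed.

Lemma sub_span A : A `<=` span A.
Proof.
move=> y Ay; exists [:: (1, y)]; split.
  by move=> p; rewrite inE => /eqP ->.
by rewrite big_cons big_nil mul1r addr0.
Qed.

Definition Dz (I : set R) : set (set R) := [set P | prime_ideal P /\ ~ (I `<=` P)].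

Lemma cover_Da a (C : set (set (set R))) :
  (forall V, C V -> zariski_open V) ->
  (forall P, prime_ideal P -> ~ P a -> exists2 V, C V & V P) ->
  exists s : seq (set (set R)), (forall V, V \in s -> C V) /\
    (forall P, prime_ideal P -> ~ P a -> exists2 V, V \in s & V P).
Proof.
move=> Copen Ccov.
pose G := [set y | exists V I, [/\ C V, V = Dz I & I y]].
have [k Lk] : exists k, span G (a ^+ k).
  apply: contrapT => /forallNP Hk.
  have [P [iP LP aP Pmax]] := zorn_avoid (span_ideal G) Hk.
  have pP := avoid_prime iP aP Pmax.
  have [V CV VP] : exists2 V, C V & V P.
    by apply: Ccov => // Pa; apply: (aP 1%N); rewrite expr1.
  have [I VI] := Copen V CV.
  move: VP; rewrite VI => -[_]; apply => y Iy; apply: LP; apply: sub_span.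
  by exists V, I; split.
case: Lk => l [Hl ek].
have : exists sV : seq (set (set R)), (forall V, V \in sV -> C V) /\
   forall Q, prime_ideal Q -> (forall V, V \in sV -> ~ V Q) ->
     Q (\sum_(p <- l) p.1 * p.2).
  elim: l Hl {ek} => [|p l IH] Hl.
    by exists [::]; split=> // Q [[Q0 _] _] _; rewrite big_nil.
  have [sV [HsV HQ]] : exists sV : seq (set (set R)), (forall V, V \in sV -> C V) /\
   forall Q, prime_ideal Q -> (forall V, V \in sV -> ~ V Q) ->
     Q (\sum_(p <- l) p.1 * p.2).
    by apply: IH => q ql; apply: Hl; rewrite in_cons ql orbT.
  have [V [I [CV VI Iy]]] : G p.2 by apply: Hl; rewrite mem_head.
  exists (V :: sV); split.
    by move=> W; rewrite in_cons => /orP [/eqP ->|/HsV].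
  move=> Q pQ HV; rewrite big_cons.
  have IQ : I `<=` Q.
    move=> z Iz; apply: contrapT => Qz; apply: (HV V); first by rewrite mem_head.
    by rewrite VI; split=> // /(_ z Iz).
  case: (pQ) => [[_ [QD QM]] _]; apply: QD; first by apply: QM; apply: IQ.
  by apply: HQ => // W Ws; apply: HV; rewrite in_cons Ws orbT.
move=> [sV [HsV HQ]]; exists sV; split=> // P pP Pa.
apply: contrapT => /forall2NP HP.
apply: Pa; apply: (prime_pow (k := k)) => //; rewrite ek; apply: HQ => // V Vs.
by case: (HP V) => // /negP; rewrite Vs.
Qed.

End Aux2.

Section Aux3.
Variable R : idomainType.
Implicit Types (I J L P Q N : set R).

Definition T0 (U : set (set R)) : Prop := U `<=` @Spec R /\
  forall P, U P -> exists s : seq R, (forall b, b \in s -> P b) /\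
    (forall Q, prime_ideal Q -> (forall b, b \in s -> Q b) -> U Q).

Lemma T0_top : is_topology_on_Spec T0.
Proof.
split.
  split=> // P _; exists [::]; split=> // Q pQ _; exact: pQ.
split; first by move=> U [].
split.
  move=> C CT; split.
    by move=> P [U CU UP]; case: (CT U CU) => + _; apply.
  move=> P [U CU UP]; have [_ H] := CT U CU; have [s [sP sQ]] := H P UP.
  by exists s; split=> // Q pQ sQ'; exists U => //; apply: sQ.
move=> U V [US HU] [VS HV]; split; first by move=> P [/US].
move=> P [UP VP]; have [s1 [s1P s1Q]] := HU P UP; have [s2 [s2P s2Q]] := HV P VP.
exists (s1 ++ s2); split.
  by move=> b; rewrite mem_cat => /orP [/s1P|/s2P].
move=> Q pQ sQ; split.
  by apply: s1Q => // b bs; apply: sQ; rewrite mem_cat bs.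
by apply: s2Q => // b bs; apply: sQ; rewrite mem_cat bs orbT.
Qed.

Lemma T0_compl K : zariski_open K -> zariski_compact K -> T0 (@Spec R `\` K).
Proof.
move=> [I KI] Kc; split; first by move=> P [].
pose C := [set V | exists b, I b /\ V = Dz [set b]].
have Cop : forall V, C V -> zariski_open V.
  by move=> V [b [_ ->]]; exists [set b].
have Ccov : K `<=` \bigcup_(V in C) V.
  move=> P; rewrite KI => -[pP nIP].
  have [b /not_implyP [Ib Pb]] : exists b, ~ (I b -> P b).
    by apply/existsNP => H; apply: nIP => z /H.
  exists (Dz [set b]); first by exists b.
  by split=> // /(_ b erefl).
have [sv [svC svcov]] := Kc C Cop Ccov.
have : exists sb : seq R, (forall b, b \in sb -> I b) /\
    (forall Q, prime_ideal Q -> (exists2 V, V \in sv & V Q) -> exists2 b, b \in sb & ~ Q b).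
  elim: sv svC {svcov} => [|V sv IH] svC.
    by exists [::]; split=> // Q _ [V].
  have [sb [sbI sbQ]] : exists sb : seq R, (forall b, b \in sb -> I b) /\
    (forall Q, prime_ideal Q -> (exists2 V, V \in sv & V Q) -> exists2 b, b \in sb & ~ Q b).
    by apply: IH => W Ws; apply: svC; rewrite in_cons Ws orbT.
  have [b [Ib Vb]] : C V by apply: svC; rewrite mem_head.
  exists (b :: sb); split.
    by move=> c; rewrite in_cons => /orP [/eqP ->|/sbI].
  move=> Q pQ [W]; rewrite in_cons => /orP [/eqP ->|Ws] WQ.
    move: WQ; rewrite Vb => -[_ nbQ]; exists b; first by rewrite mem_head.
    by move=> Qb; apply: nbQ => z ->.
  have [c cs Qc] := sbQ Q pQ (ex_intro2 _ _ W Ws WQ).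
  by exists c => //; rewrite in_cons cs orbT.
move=> [sb [sbI sbQ]] P [pP nKP].
have IP : I `<=` P.
  move=> z Iz; apply: contrapT => Pz; apply: nKP; rewrite KI; split=> //.
  by move=> /(_ z Iz).
exists sb; split; first by move=> b /sbI /IP.
move=> Q pQ sQ; split=> // KQ.
have [V Vs VQ] := svcov Q KQ.
by have [b bs] := sbQ Q pQ (ex_intro2 _ _ V Vs VQ); apply; apply: sQ.
Qed.

Lemma inverse_open_basic U : inverse_open U -> T0 U.
Proof. by move=> H; apply: (H T0 T0_top); apply: T0_compl. Qed.

Definition gen n (a : 'I_n -> R) : set R :=
  [set x | exists c : 'I_n -> R, x = \sum_(i < n) c i * a i].

Lemma gen_sub n (a : 'I_n -> R) I : is_ideal I -> (forall i, I (a i)) -> gen a `<=` I.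
Proof.
move=> [I0 [ID IM]] Ia _ [c ->]; apply: (big_ind I) => //.
by move=> i _; apply: IM.
Qed.

Lemma gen_compact n (a : 'I_n -> R) : zariski_compact (Dz (gen a)).
Proof.
move=> C Cop Ccov.
have H : forall i, exists s : seq (set (set R)), (forall V, V \in s -> C V) /\
    (forall P, prime_ideal P -> ~ P (a i) -> exists2 V, V \in s & V P).
  move=> i; apply: cover_Da => // P pP Pa; apply: Ccov; split=> // /(_ (a i)) Hi.
  apply: Pa; apply: Hi; exists (fun j => (j == i)%:R).
  rewrite (bigD1 i) //= eqxx mul1r big1 ?addr0 // => j /negbTE ->.
  by rewrite mul0r.
have [f Hf] := choice H.
exists (flatten [seq f i | i <- enum 'I_n]); split.
  move=> V /flatten_mapP [i _ Vi]; exact: (proj1 (Hf i)).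
move=> P [pP nMP].
have [i Pai] : exists i, ~ P (a i).
  apply/existsNP => Hall; apply: nMP; apply: gen_sub => //.
  by case: pP.
have [V Vs VP] := proj2 (Hf i) P pP Pai.
exists V => //; apply/flatten_mapP; exists i => //; by rewrite mem_enum.
Qed.

End Aux3.

Section Aux4.
Variable R : idomainType.
Local Notation tf := (@FracField.tofrac R).

Lemma tf_inj (x y : R) : tf x = tf y -> x = y.
Proof. by move=> e; apply/eqP; rewrite -tofrac_eq e. Qed.

Lemma dvr_key (M : set R) : maximal_ideal M -> is_DVR (localization M) ->
  exists t, M t /\ forall x, M x -> exists s b, ~ M s /\ s * x = b * t.
Proof.
move=> [iM [M1 _]] [v [vM [vmin [vsurj HS]]]].
have inS z : localization M z <-> (z = 0 \/ (z != 0 /\ 0 <= v z)) by rewrite HS.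
have v1 : v 1 = 0.
  have := vM 1 1 (oner_neq0 _) (oner_neq0 _); rewrite mulr1 => e.
  by apply: (@addrI _ (v 1)); rewrite -e addr0.
have vinv z : z != 0 -> v (z^-1) = - v z.
  move=> z0; have := vM z z^-1 z0 (invr_neq0 z0); rewrite mulfV // v1 => e.
  by apply/eqP; rewrite -addr_eq0 addrC -e.
have M0 : M 0 by case: iM.
have nM0 s : ~ M s -> s != 0 by move=> Ms; apply/eqP => s0; apply: Ms; rewrite s0.
have tf0 s : s != 0 -> tf s != 0 by rewrite tofrac_eq0.
have vge0 x : x != 0 -> 0 <= v (tf x).
  move=> x0; have : localization M (tf x).
    by exists x, 1; split=> //; rewrite tofrac1 divr1.
  by move=> /inS [/eqP|[]]; rewrite ?tofrac_eq0 ?(negbTE x0).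
have vunit s : ~ M s -> v (tf s) = 0.
  move=> Ms; have s0 := nM0 s Ms; apply/eqP; rewrite eq_le vge0 // andbT.
  have : localization M (tf s)^-1.
    by exists 1, s; split=> //; rewrite tofrac1 div1r.
  move=> /inS [/eqP|[_]]; first by rewrite invr_eq0 (negbTE (tf0 _ s0)).
  by rewrite vinv ?tf0 // oppr_ge0.
have vM1 x : M x -> x != 0 -> 1 <= v (tf x).
  move=> Mx x0; apply: contrapT => /negP; rewrite -ltNge => vle.
  have vx0 : v (tf x) = 0 by move: (vge0 x x0) vle; lia.
  have : localization M (tf x)^-1.
    by apply/inS; right; split; rewrite ?invr_eq0 ?tf0 // vinv ?tf0 // vx0 oppr0.
  move=> [b [s [Ms e]]]; have s0 := nM0 s Ms; apply: Ms.
  have e2 : tf s = tf (b * x).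
    move/eqP: e; rewrite -(div1r (tf x)) eqr_div ?tf0 //.
    by rewrite mul1r tofracM => /eqP.
  rewrite (tf_inj e2); case: iM => _ [_ HM]; exact: HM.
have [z [z0 vz]] := vsurj 1.
have [a [s [Ms ez]]] : localization M z by apply/inS; right; rewrite vz.
have s0 := nM0 s Ms.
have ea : tf a = z * tf s by rewrite ez mulfVK ?tf0.
have a0 : a != 0.
  apply/eqP => a0; move: ea; rewrite a0 tofrac0 => /esym /eqP.
  by rewrite mulf_eq0 (negbTE z0) (negbTE (tf0 _ s0)).
have vt : v (tf a) = 1 by rewrite ea vM ?tf0 // vz vunit // addr0.
have Ma : M a by apply: contrapT => /vunit; rewrite vt.
exists a; split=> // x Mx.
have [->|x0] := eqVneq x 0; first by exists 1, 0; split=> //; rewrite mulr0 mul0r.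
have w0 : tf x / tf a != 0 by rewrite mulf_neq0 ?invr_eq0 ?tf0.
have : localization M (tf x / tf a).
  apply/inS; right; split=> //.
  by rewrite vM ?invr_neq0 ?tf0 // vinv ?tf0 // vt subr_ge0 vM1.
move=> [b [s' [Ms' e]]]; exists s', b; split=> //.
have s0' := nM0 s' Ms'.
apply: tf_inj; move/eqP: e; rewrite eqr_div ?tf0 // => /eqP.
by rewrite !tofracM mulrC => ->.
Qed.

End Aux4.

Lemma gen_ideal (R : idomainType) n (a : 'I_n -> R) : is_ideal (gen a).
Proof.
split; first by exists (fun _ => 0); rewrite big1 // => i _; rewrite mul0r.
split.
  move=> _ _ [c1 ->] [c2 ->]; exists (fun i => c1 i + c2 i).
  by rewrite -big_split; apply: eq_bigr => i _; rewrite mulrDl.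
move=> r _ [c ->]; exists (fun i => r * c i).
by rewrite mulr_sumr; apply: eq_bigr => i _; rewrite mulrA.
Qed.

Lemma gen_mem (R : idomainType) n (a : 'I_n -> R) j : gen a (a j).
Proof.
exists (fun i => (i == j)%:R).
rewrite (bigD1 j) //= eqxx mul1r big1 ?addr0 // => i /negbTE ->.
by rewrite mul0r.
Qed.

Theorem proposition2p3 (R : idomainType) (M : set R) :
  almost_Dedekind R -> maximal_ideal M ->
  (isolated_in_inverse_Max M <-> finitely_generated M).
Proof.
move=> aD mM; have [iM [M1 Mmax]] := mM; split.
- move=> [U [oU UM]].
  have [_ HU] := inverse_open_basic oU.
  have MUM : (U `&` @MaxSpec R) M by rewrite UM.
  have MU : U M by case: MUM.
  have [s [sM sQ]] := HU M MU.
  have onlyM : forall N, maximal_ideal N -> (forall b, b \in s -> N b) -> N = M.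
    move=> N mN sN.
    have : (U `&` @MaxSpec R) N by split=> //; apply: sQ => //; exact: max_prime.
    by rewrite UM.
  have [t [Mt key]] := dvr_key mM (aD M mM).
  pose g := t :: s.
  exists (size g), (fun i => nth 0 g i).
  rewrite -/(gen _); apply/seteqP; split; last first.
    apply: gen_sub => // -[[|i] /= Hi] //; apply: sM; apply: mem_nth; exact: Hi.
  move=> x Mx.
  pose Cx := [set r | gen (fun i : 'I_(size g) => nth 0 g i) (r * x)].
  have iG := gen_ideal (fun i : 'I_(size g) => nth 0 g i).
  have iC : is_ideal Cx.
    case: (iG) => G0 [GD GM]; split; first by rewrite /Cx /= mul0r.
    split; first by move=> r r' Cr Cr'; rewrite /Cx /= mulrDl; apply: GD.
    by move=> r r' Cr; rewrite /Cx /= -mulrA; apply: GM.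
  suff : Cx 1 by rewrite /Cx /= mul1r.
  apply: ideal_one => // N mN CN.
  have [NM|NM] := pselect (N = M).
    rewrite NM in CN; have [s0 [b [Ms0 e]]] := key x Mx.
    apply: Ms0; apply: CN; rewrite /Cx /= e.
    case: (iG) => _ [_ GM]; apply: GM.
    have -> : t = nth 0 g (@Ordinal (size g) 0 isT) by [].
    exact: gen_mem.
  have [b bs Nb] : exists2 b, b \in s & ~ N b.
    apply: contrapT => /forall2NP H; apply: NM; apply: onlyM => // b bs.
    by case: (H b) => [/(_ bs)|/contrapT].
  apply: Nb; apply: CN; rewrite /Cx /= mulrC.
  case: (iG) => _ [_ GM]; apply: GM.
  have Hi : ((index b s).+1 < size g)%N by rewrite /= ltnS index_mem.
  have -> : b = nth 0 g (Ordinal Hi) by rewrite /= nth_index.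
  exact: gen_mem.
- move=> [n [a Ma]].
  exists (@Spec R `\` Dz M); split.
    move=> T HT Hyp; apply: Hyp; first by exists M.
    rewrite Ma.

    exact: (gen_compact (a:=a)).
  apply/seteqP; split.
    move=> N [[pN nD] mN]; apply: contrapT => NM.
    have MN : M `<=` N.
      move=> z Mz; apply: contrapT => Nz; apply: nD; split=> //.
      by move=> /(_ z Mz).
    have [iN [N1 _]] := mN.
    by have [|NT] := Mmax N iN MN; [move=> e; apply: NM; rewrite e|apply: N1; rewrite NT].
  move=> N ->; split=> //; split; first exact: max_prime.
  by move=> [_]; apply.
Qed.
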